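(* Let $n\ge2$, $1\le t\le n-1$, and let $a,b,c,d,e>0$. Consider the continuous-time Markov chain on the set of words $u=u_1\cdots u_n\in\{1,0,\bar1\}^n$ having exactly $t$ nonzero letters, with the following transitions: for $1\le i<n$, a factor $u_iu_{i+1}$ equal to $01$ becomes $10$ at rate $a$, a factor $\bar11$ becomes $1\bar1$ at rate $b$, a factor $\bar10$ becomes $0\bar1$ at rate $c$; if $u_n=\bar1$ it becomes $1$ at rate $d$; if $u_1=1$ it becomes $\bar1$ at rate $e$. Then the stationary distribution of this chain at a word $u$ is proportional to $[u]$ evaluated at these values of $a,b,c,d,e$. In particular (for $(a,b,c,d,e)$ proportional to $(2,2,2,1,1)$) this describes the stationary distribution $\pi_J$ of the type C chain $\Theta_J$ with $J=[n]\setminus\{t\}$, under the encoding of a state by the word with $u_j=1$ if column $j$ has a particle in the upper row, $u_j=\bar1$ if in the lower row, $u_j=0$ if column $j$ is empty.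
   Context: Words are finite sequences over $\{1,0,\bar1\}$ ($\bar1=-1$). For every word $u$, $[u]$ is the Laurent polynomial in indeterminates $a,b,c,d,e$ determined uniquely by the recursions, valid for all (possibly empty) words $v,w$: $[v01w]=[v0w]/a$, $[v\bar11w]=([v\bar1w]+[v1w])/b$, $[v\bar10w]=[v0w]/c$, $[v\bar1]=[v]/d$, $[1v]=[v]/e$, and $[u]=1$ whenever $u$ consists only of $0$'s (including the empty word). Type C chain $\Theta_J$ for $J=[n]\setminus\{t\}$: states are placements of $t$ indistinguishable particles in a $2\times n$ array (upper row, lower row), at most one per column. The dynamics, in word encoding, is exactly the chain above with rates $(a,b,c,d,e)=(2,2,2,1,1)$: an upper particle moves left into an empty column or across a lower particle in the adjacent column, a lower particle moves right, and at the ends an upper particle in column $1$ drops to the lower row and a lower particle in column $n$ rises to the upper row. *)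

(* Defs.v *)
From HB Require Import structures.
From mathcomp Require Import all_boot all_order all_algebra.
Set Implicit Arguments. Unset Strict Implicit. Unset Printing Implicit Defensive.
Import Order.TTheory GRing.Theory Num.Theory.
Local Open Scope ring_scope.

(* Letters of the alphabet {1, 0, bar1}, encoded in the finite type option bool. *)
Definition letter := option bool.
Definition L1 : letter := Some true.
Definition L0 : letter := None.
Definition Lbar : letter := Some false.

Section Bracket.
Variable R : fieldType.
Variables a b c d e : R.

(* f satisfies all the defining recursions of the bracket [u]
   (evaluated at the values a,b,c,d,e). *)
Definition bracket_rec (f : seq letter -> R) : Prop :=
  [/\ (forall v w : seq letter, f (v ++ L0 :: L1 :: w) = f (v ++ L0 :: w) / a),
      (forall v w : seq letter,
          f (v ++ Lbar :: L1 :: w) = (f (v ++ Lbar :: w) + f (v ++ L1 :: w)) / b),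
      (forall v w : seq letter, f (v ++ Lbar :: L0 :: w) = f (v ++ L0 :: w) / c),
      (forall v : seq letter, f (rcons v Lbar) = f v / d)
    &      (forall v : seq letter, f (L1 :: v) = f v / e) ]
  /\ (forall u : seq letter, all (pred1 L0) u -> f u = 1).

Definition swap_rate (x y : letter) : option R :=
  if (x == L0) && (y == L1) then Some a
  else if (x == Lbar) && (y == L1) then Some b
  else if (x == Lbar) && (y == L0) then Some c
  else None.

Definition moves (u : seq letter) : seq (seq letter * R) :=
  pmap (fun i =>
          let x := nth L0 u i in let y := nth L0 u i.+1 in
          omap (fun r => (set_nth L0 (set_nth L0 u i y) i.+1 x, r)) (swap_rate x y))
       (iota 0 (size u).-1)
  ++ (if (size u > 0)%N && (last L0 u == Lbar)
      then [:: (set_nth L0 u (size u).-1 L1, d)] else [::])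
  ++ (if head L0 u == L1 then [:: (set_nth L0 u 0 Lbar, e)] else [::]).

Definition rate (u v : seq letter) : R :=
  \sum_(p <- moves u | p.1 == v) p.2.

Definition out_rate (u : seq letter) : R := \sum_(p <- moves u) p.2.

Definition in_state_space (n t : nat) (u : n.-tuple letter) : bool :=
  count (fun x => x != L0) u == t.

End Bracket.

Definition stationary (R : realFieldType) (a b c d e : R) (n t : nat)
    (pi : n.-tuple letter -> R) : Prop :=
  [/\ (forall u, in_state_space t u -> 0 <= pi u),
      \sum_(u | in_state_space t u) pi u = 1
    & (forall v, in_state_space t v ->
         \sum_(u | in_state_space t u) pi u * rate a b c d e u v
         = pi v * out_rate a b c d e v)].

(* Main.v *)
Require Import Defs.
From HB Require Import structures.
From mathcomp Require Import all_boot all_order all_algebra.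
From mathcomp Require Import ring lra.
Set Implicit Arguments. Unset Strict Implicit. Unset Printing Implicit Defensive.
Import Order.TTheory GRing.Theory Num.Theory.
Local Open Scope ring_scope.



Section Exist.

Variable R : fieldType.
Variables a b c d e : R.
Hypotheses (a0 : a != 0) (b0 : b != 0) (c0 : c != 0) (d0 : d != 0) (e0 : e != 0).

Definition TA (p : {poly R}) : {poly R} := b^-1 *: (p + p * 'X).
Definition TD (k : R) (p : {poly R}) : {poly R} :=
  b^-1 *: (p + drop_poly 1 p + ((k - 1) * p`_0)%:P).
Definition TZ (p : {poly R}) : {poly R} := (p.[b / c - 1])%:P.

Definition stp (st : {poly R} * R) (x : letter) : {poly R} * R :=
  match x with
  | Some true => (TD st.2 st.1, st.2)
  | Some false => (TA st.1, st.2)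
  | None => (TZ st.1, b / a)
  end.

Definition FF (w : seq letter) (st : {poly R} * R) : R :=
  (foldl stp st w).1.[b / d - 1].

Definition fbr (u : seq letter) : R := FF u (1, b / e).

Lemma TA_lin s p q : TA (s *: p + q) = s *: TA p + TA q.
Proof. apply/polyP => i; rewrite /TA !(coefD, coefZ, coefMX); case: (i == 0)%N; ring. Qed.

Lemma TD_lin k s p q : TD k (s *: p + q) = s *: TD k p + TD k q.
Proof.
rewrite /TD drop_polyD drop_polyZ coefD coefZ.
apply/polyP => i; rewrite !(coefD, coefZ, coefC); case: (i == 0)%N; ring.
Qed.

Lemma TZ_lin s p q : TZ (s *: p + q) = s *: TZ p + TZ q.
Proof. by rewrite /TZ hornerD hornerZ polyCD polyCM -mul_polyC. Qed.

Lemma FF_lin w k s p q : FF w (s *: p + q, k) = s * FF w (p, k) + FF w (q, k).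
Proof.
elim: w k p q => [|x w IH] k p q /=.
  by rewrite /FF /= hornerD hornerZ.
rewrite /FF /=; case: x => [[]|] /=.
- by rewrite TD_lin -/(FF _ _) IH.
- by rewrite TA_lin -/(FF _ _) IH.
- by rewrite TZ_lin -/(FF _ _) IH.
Qed.


Lemma FF_scale w k s p : FF w (s *: p, k) = s * FF w (p, k).
Proof.
have := FF_lin w k s p 0; rewrite addr0 => ->.
have := FF_lin w k 1 0 0; rewrite scaler0 addr0 mul1r => H.
have : FF w (0, k) = 0.
  by move: H; rewrite -{1}[FF w (0, k)]addr0 => /addrI.
by move=> ->; rewrite addr0.
Qed.

Lemma FF_add w k p q : FF w (p + q, k) = FF w (p, k) + FF w (q, k).
Proof. by rewrite -{1}[p]scale1r FF_lin mul1r. Qed.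

Lemma FF_const w k s : FF w (s%:P, k) = s * FF w (1, k).
Proof. by rewrite -FF_scale -alg_polyC. Qed.

Lemma fbr_zeros u : all (pred1 L0) u -> fbr u = 1.
Proof.
rewrite /fbr; elim: u (b / e) => [|x u IH] k /=; first by rewrite /FF /= hornerC.
case/andP => /eqP -> /IH {}IH; rewrite /FF /= /TZ hornerC.
exact: IH.
Qed.

Lemma fbr_e v : fbr (L1 :: v) = fbr v / e.
Proof.
rewrite /fbr /FF /= -/(FF v _).
have -> : TD (b / e) 1 = (e^-1)%:P.
  rewrite /TD drop_poly_eq0 ?size_poly1 // coef1 /= addr0 mulr1 -polyCD -mul_polyC -polyCM.
  by congr (_%:P); field; rewrite ?a0 ?b0 ?c0 ?d0 ?e0 //.
by rewrite FF_const mulrC.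
Qed.

Lemma fbr_d v : fbr (rcons v Lbar) = fbr v / d.
Proof.
rewrite /fbr /FF -cats1 foldl_cat /=.
set p := (foldl stp _ v).1.
rewrite /TA hornerZ hornerD hornerM hornerX.
by field; rewrite ?a0 ?b0 ?c0 ?d0 ?e0 //.
Qed.

Lemma fbr_a v w : fbr (v ++ L0 :: L1 :: w) = fbr (v ++ L0 :: w) / a.
Proof.
rewrite /fbr /FF !foldl_cat /= -!/(FF w _).
set C := (foldl stp (1, b / e) v).1.[b / c - 1].
have -> : TD (b / a) (TZ (foldl stp (1, b / e) v).1) = (C / a)%:P.
  rewrite /TD /TZ -/C drop_poly_eq0 ?size_polyC ?leq_b1 // coefC /= addr0.
  rewrite -polyCD -mul_polyC -polyCM; congr (_%:P); field; rewrite ?a0 ?b0 ?c0 ?d0 ?e0 //.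
by rewrite /TZ -/C FF_const [in RHS]FF_const mulrAC.
Qed.

Lemma fbr_c v w : fbr (v ++ Lbar :: L0 :: w) = fbr (v ++ L0 :: w) / c.
Proof.
rewrite /fbr /FF !foldl_cat /= -!/(FF w _).
set p := (foldl stp (1, b / e) v).1.
rewrite /TZ /TA hornerZ hornerD hornerM hornerX FF_const [in RHS]FF_const.
by field; rewrite ?a0 ?b0 ?c0 ?d0 ?e0 //.
Qed.

Lemma TDA k p : TD k (TA p) = b^-1 *: (TA p + TD k p).
Proof.
apply/polyP => i; rewrite /TD /TA.
rewrite !(coefD, coefZ, coefMX, coef_drop_poly, coefC).
case: i => [|i] /=; rewrite ?addn1 ?coefMX /=; ring.
Qed.

Lemma fbr_b v w :
  fbr (v ++ Lbar :: L1 :: w) = (fbr (v ++ Lbar :: w) + fbr (v ++ L1 :: w)) / b.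
Proof.
rewrite /fbr /FF !foldl_cat /= -!/(FF w _).
by rewrite TDA FF_scale FF_add mulrC.
Qed.

Lemma fbr_rec : bracket_rec a b c d e fbr.
Proof.
split; [split|].
- exact: fbr_a.
- exact: fbr_b.
- exact: fbr_c.
- exact: fbr_d.
- exact: fbr_e.
- exact: fbr_zeros.
Qed.

End Exist.



Definition redex (x y : letter) : bool :=
  [|| (x == L0) && (y == L1), (x == Lbar) && (y == L1) | (x == Lbar) && (y == L0)].

Lemma pattern (u : seq letter) :
  head L0 u != L1 -> last L0 u != Lbar -> ~~ all (pred1 L0) u ->
  exists p x y s, u = p ++ x :: y :: s /\ redex x y.
Proof.
elim: u => [|x w IH] //= hx hl hall.
case: w IH hl hall => [|y w] IH hl hall.
  by move: hx hl hall; case: x => [[]|].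
case: x hx hl hall => [[]|] //= _ hl hall.
-
  case: y IH hl hall => [[]|] IH hl hall.
  + by exists [::], Lbar, L1, w.
  + have [p [x' [y' [s [-> r]]]]] := IH erefl hl (negbT erefl).
    by exists (Lbar :: p), x', y', s.
  + by exists [::], Lbar, L0, w.
-
  case: y IH hl hall => [[]|] IH hl hall.
  + by exists [::], L0, L1, w.
  + have [p [x' [y' [s [-> r]]]]] := IH erefl hl (negbT erefl).
    by exists (L0 :: p), x', y', s.
  + have [p [x' [y' [s [-> r]]]]] := IH erefl hl hall.
    by exists (L0 :: p), x', y', s.
Qed.

Lemma f_pos (R : realFieldType) (a b c d e : R) (f : seq letter -> R) :
  0 < a -> 0 < b -> 0 < c -> 0 < d -> 0 < e ->
  bracket_rec a b c d e f -> forall u, 0 < f u.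
Proof.
move=> ha hb hc hd he [[ra rb rc rd re] rz] u.
move: {2}(size u) (leqnn (size u)) => N; elim: N u => [|N IH] u hs.
  by case: u hs => // _; rewrite rz.
have [hz|hz] := boolP (all (pred1 L0) u); first by rewrite rz.
case: u hs hz => [|x v] hs hz; first by rewrite rz.
have [hx|hx] := eqVneq x L1.
  by rewrite hx re divr_gt0 // IH.
case/lastP E: (x :: v) => [//|w y].
have hw : (size w <= N)%N by move: hs; rewrite -/(size (x :: v)) E size_rcons.
have [hy|hy] := eqVneq y Lbar.
  by rewrite hy rd divr_gt0 // IH.
have hl : last L0 (x :: v) != Lbar by rewrite E last_rcons.
have [p [x' [y' [s [Eu r]]]]] := @pattern (x :: v) hx hl hz.
have hsz : forall z, (size (p ++ z :: s) <= N)%N.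
  by move=> z; move: hs; rewrite Eu !size_cat /= !addnS.
rewrite -E Eu; move: r; rewrite /redex.
case: x' Eu => [[]|]; case: y' => [[]|] //= Eu _.
- by rewrite rb divr_gt0 // addr_gt0 // IH.
- by rewrite rc divr_gt0 // IH.
- by rewrite ra divr_gt0 // IH.
Qed.



Section Moves.
Variable R : fieldType.
Variables a b c d e : R.

Definition mvb (u : seq letter) (i : nat) : option (seq letter * R) :=
  let x := nth L0 u i in let y := nth L0 u i.+1 in
  omap (fun r => (set_nth L0 (set_nth L0 u i y) i.+1 x, r)) (swap_rate a b c x y).
Definition mvR (u : seq letter) : option (seq letter * R) :=
  if (size u > 0)%N && (last L0 u == Lbar)
  then Some (set_nth L0 u (size u).-1 L1, d) else None.
Definition mvL (u : seq letter) : option (seq letter * R) :=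
  if head L0 u == L1 then Some (set_nth L0 u 0 Lbar, e) else None.

Definition W (o : option (seq letter * R)) (v : seq letter) : R :=
  if o is Some p then (if p.1 == v then p.2 else 0) else 0.
Definition O (o : option (seq letter * R)) : R :=
  if o is Some p then p.2 else 0.
Definition lst (o : option (seq letter * R)) := if o is Some p then [:: p] else [::].

Lemma movesE u : moves a b c d e u =
  pmap (mvb u) (iota 0 (size u).-1) ++ lst (mvR u) ++ lst (mvL u).
Proof. by rewrite /moves /mvR /mvL; case: ifP => _; case: ifP. Qed.

Lemma sum_pmapW (F : nat -> option (seq letter * R)) s v :
  \sum_(p <- pmap F s | p.1 == v) p.2 = \sum_(i <- s) W (F i) v.
Proof.
elim: s => [|i s IH] /=; first by rewrite !big_nil.
rewrite big_cons -IH; case: (F i) => [p|] //=.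
  by rewrite big_cons; case: ifP => _ //; rewrite add0r.
by rewrite add0r.
Qed.

Lemma sum_pmapO (F : nat -> option (seq letter * R)) s :
  \sum_(p <- pmap F s) p.2 = \sum_(i <- s) O (F i).
Proof.
elim: s => [|i s IH] /=; first by rewrite !big_nil.
rewrite big_cons -IH; case: (F i) => [p|] //=; first by rewrite big_cons.
by rewrite add0r.
Qed.

Lemma sum_lstW o v : \sum_(p <- lst o | p.1 == v) p.2 = W o v.
Proof. by case: o => [p|] /=; rewrite ?big_nil // big_cons big_nil; case: ifP; rewrite ?addr0. Qed.

Lemma sum_lstO o : \sum_(p <- lst o) p.2 = O o.
Proof. by case: o => [p|] /=; rewrite ?big_nil // big_cons big_nil addr0. Qed.

Lemma rateE u v : rate a b c d e u v =
  \sum_(i <- iota 0 (size u).-1) W (mvb u i) v + W (mvR u) v + W (mvL u) v.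
Proof. by rewrite /rate movesE !big_cat /= sum_pmapW !sum_lstW addrA. Qed.

Lemma out_rateE u : out_rate a b c d e u =
  \sum_(i <- iota 0 (size u).-1) O (mvb u i) + O (mvR u) + O (mvL u).
Proof. by rewrite /out_rate movesE !big_cat /= sum_pmapO !sum_lstO addrA. Qed.

End Moves.

Definition swp (v : seq letter) (i : nat) :=
  set_nth L0 (set_nth L0 v i (nth L0 v i.+1)) i.+1 (nth L0 v i).

Lemma size_swp v i : (i.+1 < size v)%N -> size (swp v i) = size v.
Proof.
by move=> h; rewrite /swp !size_set_nth (maxn_idPr (ltnW h)) (maxn_idPr h).
Qed.

Lemma nth_swp v i j : (i.+1 < size v)%N ->
  nth L0 (swp v i) j = if j == i.+1 then nth L0 v i else if j == i then nth L0 v i.+1 else nth L0 v j.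
Proof. by move=> h; rewrite /swp nth_set_nth /= nth_set_nth. Qed.

Lemma swpK v i : (i.+1 < size v)%N -> swp (swp v i) i = v.
Proof.
move=> h; have hs := size_swp h.
apply: (@eq_from_nth _ L0); first by rewrite !size_swp ?hs.
have e1 : (i.+1 == i) = false by rewrite eqn_leq ltnn.
have e2 : (i == i.+1) = false by rewrite eqn_leq ltnn andbF.
move=> j _; rewrite !nth_swp ?hs //.
case: (j =P i.+1) => [->|h1]; first by rewrite ?e1 ?e2 ?eqxx.
case: (j =P i) => [->|h2]; by rewrite ?e1 ?e2 ?eqxx.
Qed.

Lemma decomp v i : (i.+1 < size v)%N ->
  v = take i v ++ nth L0 v i :: nth L0 v i.+1 :: drop i.+2 v.
Proof.
move=> h; rewrite -(drop_nth L0) // -(drop_nth L0) ?(ltnW h) //.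
by rewrite cat_take_drop.
Qed.

Lemma swp_cat p x y s : swp (p ++ x :: y :: s) (size p) = p ++ y :: x :: s.
Proof. by elim: p => [|z p IH] //=; rewrite /swp /= -/(swp _ _) IH. Qed.

Lemma swpE v i : (i.+1 < size v)%N ->
  swp v i = take i v ++ nth L0 v i.+1 :: nth L0 v i :: drop i.+2 v.
Proof.
move=> h; rewrite {1}(decomp h).
have hi : size (take i v) = i by rewrite size_take (ltnW h).
by have := swp_cat (take i v) (nth L0 v i) (nth L0 v i.+1) (drop i.+2 v); rewrite hi.
Qed.

Lemma count_swp (P : pred letter) v i : (i.+1 < size v)%N -> count P (swp v i) = count P v.
Proof.
move=> h; rewrite swpE // [in RHS](decomp h) !count_cat /=.
by congr (_ + _)%N; rewrite addnCA.
Qed.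

Lemma set_nth_rcons (p : seq letter) x z : set_nth L0 (rcons p x) (size p) z = rcons p z.
Proof. by elim: p => [|y p IH] //=; rewrite IH. Qed.

Definition hat (x : letter) {R : ringType} : R :=
  match x with Some true => 1 | Some false => -1 | None => 0 end.

Section Bal.
Variable R : fieldType.
Variables a b c d e : R.
Hypotheses (a0 : a != 0) (b0 : b != 0) (c0 : c != 0) (d0 : d != 0) (e0 : e != 0).
Variable f : seq letter -> R.
Hypothesis hf : bracket_rec a b c d e f.

Lemma collapse n t (F : n.-tuple letter -> R) (s0 : seq letter) C :
  size s0 = n -> count (fun x => x != L0) s0 = t \/ C = 0 ->
  (forall u : n.-tuple letter, F u = if val u == s0 then C else 0) ->
  \sum_(u : n.-tuple letter | in_state_space t u) F u = C.
Proof.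
move=> hs [hc|->] hF; last by rewrite big1 // => u _; rewrite hF; case: ifP.
have hs' : size s0 == n by apply/eqP.
pose u0 := Tuple hs'.
rewrite (bigD1 u0) /=; last by rewrite /in_state_space /= hc.
rewrite hF eqxx big1 ?addr0 // => u /andP [_ hu]; rewrite hF ifN //.
Qed.

Lemma bulk_term (u v : seq letter) i : size u = size v -> (i.+1 < size v)%N ->
  f u * W (mvb a b c u i) v =
  if u == swp v i then f (swp v i) * odflt 0 (swap_rate a b c (nth L0 v i.+1) (nth L0 v i)) else 0.
Proof.
move=> hs h; have hu : (i.+1 < size u)%N by rewrite hs.
have -> : mvb a b c u i = omap (fun r => (swp u i, r)) (swap_rate a b c (nth L0 u i) (nth L0 u i.+1)) by [].
case: eqP => [->|hne].
  have e2 : (i == i.+1) = false by rewrite eqn_leq ltnn andbF.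
  rewrite !nth_swp // !eqxx e2 swpK //.
  set sr := swap_rate a b c (nth L0 v i.+1) (nth L0 v i).
  by case: sr => [r|] /=; rewrite ?eqxx ?mulr0.
case: (swap_rate _ _ _ _ _) => [r|] /=; last by rewrite mulr0.
case: eqP => [he|]; last by rewrite mulr0.
by case: hne; rewrite -he swpK.
Qed.

Definition srcR (v : seq letter) := set_nth L0 v (size v).-1 Lbar.
Definition srcL (v : seq letter) := set_nth L0 v 0 L1.

Lemma R_term (u v : seq letter) : size u = size v -> (0 < size v)%N ->
  f u * W (mvR d u) v =
  if u == srcR v then (if last L0 v == L1 then f (srcR v) * d else 0) else 0.
Proof.
case/lastP: v => [|p x] //; case/lastP: u => [|q y] //; first by rewrite size_rcons.
move=> hs _; rewrite /srcR /mvR !size_rcons /= !set_nth_rcons !last_rcons.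
rewrite !eqseq_rcons.
have [->|hy] := eqVneq y Lbar; last by rewrite andbF /= mulr0.
rewrite andbT /= eqseq_rcons; case: eqP => [->|hq] /=; last by rewrite mulr0.
case: (x =P L1) => [->|hx]; rewrite ?mulr0 ?eqxx //.
by rewrite eq_sym (introF eqP hx) mulr0.
Qed.

Lemma L_term (u v : seq letter) : size u = size v -> (0 < size v)%N ->
  f u * W (mvL e u) v =
  if u == srcL v then (if head L0 v == Lbar then f (srcL v) * e else 0) else 0.
Proof.
case: v => [|x p] //; case: u => [|y q] // hs _; rewrite /srcL /mvL /=.
rewrite !eqseq_cons.
have [->|hy] := eqVneq y L1; last by rewrite /= mulr0.
rewrite /= eqseq_cons; case: (q =P p) => [->|hq] /=; rewrite ?andbF ?mulr0 //.
case: (x =P Lbar) => [->|hx]; rewrite ?mulr0 ?eqxx ?andbT //.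
by rewrite eq_sym (introF eqP hx) mulr0.
Qed.


Ltac fld := field; rewrite ?a0 ?b0 ?c0 ?d0 ?e0 //.

Lemma loc_bulk (p s : seq letter) (x y : letter) :
  f (p ++ y :: x :: s) * odflt 0 (swap_rate a b c y x)
  - f (p ++ x :: y :: s) * odflt 0 (swap_rate a b c x y)
  = hat x * f (p ++ y :: s) - hat y * f (p ++ x :: s).
Proof.
case: hf => [[ra rb rc _ _] _].
case: x => [[]|]; case: y => [[]|] /=; rewrite ?mulr0 ?subr0 ?mul0r ?mul1r ?sub0r ?subrr //.
all: rewrite ?ra ?rb ?rc; try fld.
Qed.


Definition H (v : seq letter) (k : nat) : R :=
  hat (nth L0 v k) * f (take k v ++ drop k.+1 v).

Lemma loc_bulk_v (v : seq letter) i : (i.+1 < size v)%N ->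
  f (swp v i) * odflt 0 (swap_rate a b c (nth L0 v i.+1) (nth L0 v i))
  - f v * O (mvb a b c v i) = H v i - H v i.+1.
Proof.
move=> h.
have -> : O (mvb a b c v i) = odflt 0 (swap_rate a b c (nth L0 v i) (nth L0 v i.+1)).
  by rewrite /mvb /=; case: (swap_rate _ _ _ _ _).
rewrite /H swpE //.
have hi : (i < size v)%N by apply: ltnW.
rewrite (drop_nth L0 h) (take_nth L0 hi) cat_rcons.
by rewrite [in f v](decomp h) loc_bulk.
Qed.

Lemma loc_R (v : seq letter) : (0 < size v)%N ->
  (if last L0 v == L1 then f (srcR v) * d else 0) - f v * O (mvR d v) = H v (size v).-1.
Proof.
case: hf => [[_ _ _ rd _] _].
case/lastP: v => [|p x] // _.
rewrite /srcR /mvR /H !size_rcons /= set_nth_rcons last_rcons nth_rcons ltnn eqxx.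
have -> : take (size p) (rcons p x) = p by rewrite -cats1 take_size_cat.
have -> : drop (size p).+1 (rcons p x) = [::] by rewrite drop_oversize // size_rcons.
rewrite cats0 set_nth_rcons.
case: x => [[]|] /=; rewrite ?mul0r ?mulr0 ?subr0 ?mul1r ?sub0r ?mulN1r ?rd //; fld.
Qed.

Lemma loc_L (v : seq letter) : (0 < size v)%N ->
  (if head L0 v == Lbar then f (srcL v) * e else 0) - f v * O (mvL e v) = - H v 0.
Proof.
case: hf => [[_ _ _ _ re] _].
case: v => [|x p] // _.
rewrite /srcL /mvL /H /= drop0.
case: x => [[]|] /=; rewrite ?mul0r ?mulr0 ?subr0 ?mul1r ?sub0r ?mulN1r ?oppr0 ?opprK ?re //; fld.
Qed.

Lemma balance_f n t (v : n.-tuple letter) : (0 < n)%N -> in_state_space t v ->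
  \sum_(u : n.-tuple letter | in_state_space t u) f u * rate a b c d e u v = f v * out_rate a b c d e v.
Proof.
move=> hn hv.
have hsv : size v = n by rewrite size_tuple.
have hcv : count (fun x => x != L0) v = t by apply/eqP.
transitivity (\sum_(i <- iota 0 n.-1) \sum_(u : n.-tuple letter | in_state_space t u) f u * W (mvb a b c u i) v
   + \sum_(u : n.-tuple letter | in_state_space t u) f u * W (mvR d u) v
   + \sum_(u : n.-tuple letter | in_state_space t u) f u * W (mvL e u) v).
  rewrite exchange_big -!big_split /=; apply: eq_bigr => u _.
  by rewrite rateE size_tuple !mulrDr mulr_sumr.
have -> : \sum_(i <- iota 0 n.-1) \sum_(u : n.-tuple letter | in_state_space t u) f u * W (mvb a b c u i) v
  = \sum_(i <- iota 0 n.-1) (f (swp v i) * odflt 0 (swap_rate a b c (nth L0 v i.+1) (nth L0 v i))).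
  apply: eq_big_seq => i; rewrite mem_iota add0n => hi.
  have hi' : (i.+1 < size v)%N by rewrite hsv; case: n hn hi {hsv hv hcv v} => // n _; rewrite ltnS.
  apply: (collapse (s0 := swp v i)); first by rewrite size_swp.
    by left; rewrite count_swp.
  by move=> u; rewrite bulk_term // !size_tuple.
have -> : \sum_(u : n.-tuple letter | in_state_space t u) f u * W (mvR d u) v
    = (if last L0 v == L1 then f (srcR v) * d else 0).
  apply: (collapse (s0 := srcR v)).
  - by rewrite /srcR size_set_nth hsv; apply/maxn_idPr; case: n hn {hsv hv hcv v}.
  - case: ifP => [hl|]; [left | by right].
    rewrite /srcR count_set_nth_ltn; last by rewrite hsv; case: n hn {hsv hv hcv v hl}.
    by rewrite nth_last (eqP hl) /= hcv addnK.
  by move=> u; rewrite R_term // ?size_tuple ?hsv.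
have -> : \sum_(u : n.-tuple letter | in_state_space t u) f u * W (mvL e u) v
    = (if head L0 v == Lbar then f (srcL v) * e else 0).
  apply: (collapse (s0 := srcL v)).
  - by rewrite /srcL size_set_nth hsv; apply/maxn_idPr.
  - case: ifP => [hl|]; [left | by right].
    rewrite /srcL count_set_nth_ltn; last by rewrite hsv.
    by rewrite nth0 (eqP hl) /= hcv addnK.
  by move=> u; rewrite L_term // ?size_tuple ?hsv.
rewrite out_rateE hsv.
apply/eqP; rewrite -subr_eq0; apply/eqP.
set A := \sum_(i <- iota 0 n.-1) _.
have -> : A + (if last L0 v == L1 then f (srcR v) * d else 0) +
  (if head L0 v == Lbar then f (srcL v) * e else 0) -
  f v * (\sum_(i <- iota 0 n.-1) O (mvb a b c v i) + O (mvR d v) + O (mvL e v))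
  = \sum_(i <- iota 0 n.-1) (H v i - H v i.+1)
    + ((if last L0 v == L1 then f (srcR v) * d else 0) - f v * O (mvR d v))
    + ((if head L0 v == Lbar then f (srcL v) * e else 0) - f v * O (mvL e v)).
  rewrite -[\sum_(i <- iota 0 n.-1) (H v i - H v i.+1)](eq_big_seq (F1 := fun i => f (swp v i) * odflt 0 (swap_rate a b c (nth L0 v i.+1) (nth L0 v i)) - f v * O (mvb a b c v i))).
    rewrite sumrB -/A -mulr_sumr !mulrDr; ring.
  move=> i; rewrite mem_iota add0n => hi; apply: loc_bulk_v.
  by rewrite hsv; case: n hn hi {hsv hv hcv v A} => // n _; rewrite ltnS.
rewrite loc_R ?hsv // loc_L ?hsv //.
have -> : \sum_(i <- iota 0 n.-1) (H v i - H v i.+1) = - (H v n.-1 - H v 0).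
  rewrite -(telescope_sumr (fun k => H v k)) // -sumrN /index_iota subn0.
  by apply: eq_bigr => i _; rewrite opprB.
ring.
Qed.
End Bal.



Section Reach.
Variable R : fieldType.
Variables a b c d e : R.

Definition step (u w : seq letter) := exists r, (w, r) \in moves a b c d e u.

Inductive reach : seq letter -> seq letter -> Prop :=
| rrefl u : reach u u
| rstep u w v : step u w -> reach w v -> reach u v.

Lemma reach_trans u w v : reach u w -> reach w v -> reach u v.
Proof. by elim=> // x y z hs _ IH /IH; apply: rstep. Qed.

Lemma reach1 u w : step u w -> reach u w.
Proof. by move=> h; apply: rstep h (rrefl _). Qed.

Lemma nth_cat2 (p s : seq letter) x y :
  nth L0 (p ++ x :: y :: s) (size p) = x /\ nth L0 (p ++ x :: y :: s) (size p).+1 = y.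
Proof. by rewrite !nth_cat ltnn ltnNge leqnSn /= subnn subSnn. Qed.

Lemma step_swap p s x y r : swap_rate a b c x y = Some r ->
  step (p ++ x :: y :: s) (p ++ y :: x :: s).
Proof.
move=> hr; exists r; rewrite movesE mem_cat; apply/orP; left.
rewrite mem_pmap; apply/mapP; exists (size p).
  by rewrite mem_iota add0n size_cat /= addnS /= addnS ltnS leq_addr.
have [h1 h2] := nth_cat2 p s x y.
rewrite /mvb h1 h2 hr /=; have := swp_cat p x y s; rewrite /swp h1 h2 => ->.
by [].
Qed.

Lemma step_R p : step (rcons p Lbar) (rcons p L1).
Proof.
exists d; rewrite movesE !mem_cat; apply/orP; right; apply/orP; left.
by rewrite /mvR size_rcons last_rcons /= set_nth_rcons mem_seq1.
Qed.

Lemma step_L s : step (L1 :: s) (Lbar :: s).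
Proof.
exists e; rewrite movesE !mem_cat; apply/orP; right; apply/orP; right.
by rewrite /mvL /= mem_seq1.
Qed.

Lemma L_barR p q s : Lbar \notin s -> reach (p ++ Lbar :: s ++ q) (p ++ s ++ Lbar :: q).
Proof.
elim: s p => [|y s IH] p /=; first by move=> _; apply: rrefl.
rewrite in_cons negb_or => /andP [hy hs].
have [r hr] : exists r, swap_rate a b c Lbar y = Some r.
  by case: y hy => [[]|] //= _; eexists.
apply: rstep (step_swap p _ hr) _.
by have := IH (rcons p y) hs; rewrite !cat_rcons.
Qed.

Lemma L_oneL p q s : L1 \notin s -> reach (p ++ s ++ L1 :: q) (p ++ L1 :: s ++ q).
Proof.
elim: s p => [|x s IH] p /=; first by move=> _; apply: rrefl.
rewrite in_cons negb_or => /andP [hx hs].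
have [r hr] : exists r, swap_rate a b c x L1 = Some r.
  by case: x hx => [[]|] //= _; eexists.
apply: reach_trans (_ : reach _ (p ++ x :: L1 :: s ++ q)) _.
  by have := IH (rcons p x) hs; rewrite !cat_rcons.
exact: reach1 (step_swap p _ hr).
Qed.

Lemma L_zeroR k p q : reach (p ++ L0 :: nseq k L1 ++ q) (p ++ nseq k L1 ++ L0 :: q).
Proof.
elim: k p => [|k IH] p /=; first by apply: rrefl.
apply: rstep (step_swap p _ (_ : swap_rate a b c L0 L1 = Some a)) _ => //.
by have := IH (rcons p L1); rewrite !cat_rcons.
Qed.

Definition nz (x : letter) := x != L0.

Lemma phase1 u p : exists u', [/\ Lbar \notin u', size u' = size u,
  count nz u' = count nz u & reach (p ++ u) (p ++ u')].
Proof.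
elim: u p => [|x w IH] p; first by exists [::]; split => //; apply: rrefl.
have [w' [hb hs hc hr]] := IH (rcons p x).
rewrite !cat_rcons in hr.
have [hx|hx] := eqVneq x Lbar.
  exists (rcons w' L1); split.
  - by rewrite mem_rcons in_cons negb_or hb.
  - by rewrite size_rcons hs.
  - by rewrite -cats1 count_cat hc hx /= addn0 addnC.
  apply: reach_trans hr _; rewrite hx.
  apply: reach_trans (_ : reach _ (p ++ w' ++ Lbar :: [::])) _.
    by have := L_barR p [::] hb; rewrite cats0.
  by rewrite -cats1 catA cats1 catA cats1; apply: reach1; apply: step_R.
exists (x :: w'); split => //.
- by rewrite in_cons negb_or eq_sym hx.
- by rewrite /= hs.
- by rewrite /= hc.
Qed.

Lemma phase2 z p q : Lbar \notin z ->
  reach (p ++ z ++ q) (p ++ nseq (count (pred1 L1) z) L1 ++ nseq (count (pred1 L0) z) L0 ++ q).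
Proof.
elim: z p => [|x z IH] p /=; first by move=> _; apply: rrefl.
rewrite in_cons negb_or => /andP [hx hz].
have := IH (rcons p x) hz; rewrite !cat_rcons => hr.
apply: reach_trans hr _.
case: x hx => [[]|] //= _.
- by rewrite add0n; apply: rrefl.
- by rewrite !add0n; exact: L_zeroR.
Qed.

Lemma phase3 z p q : Lbar \notin z ->
  reach (p ++ nseq (count (pred1 L0) z) L0 ++ nseq (count (pred1 L1) z) L1 ++ q) (p ++ z ++ q).
Proof.
elim: z p => [|x z IH] p /=; first by move=> _; apply: rrefl.
rewrite in_cons negb_or => /andP [hx hz].
have := IH (rcons p x) hz; rewrite !cat_rcons => hr.
case: x hx hr => [[]|] //= _ hr.
- rewrite !add0n.
  apply: reach_trans (_ : reach _ (p ++ L1 :: nseq (count (pred1 L0) z) L0 ++ nseq (count (pred1 L1) z) L1 ++ q)) hr.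
  by apply: L_oneL; rewrite mem_nseq andbF.
Qed.

Lemma bridge k z : Lbar \notin z -> reach (nseq k L1 ++ z) (z ++ nseq k L1).
Proof.
elim: k z => [|k IH] z hz /=; first by rewrite cats0; apply: rrefl.
apply: rstep (step_L _) _.
apply: reach_trans (_ : reach _ ((nseq k L1 ++ z) ++ Lbar :: [::])) _.
  have := L_barR [::] [::] (s := nseq k L1 ++ z); rewrite /= cats0; apply.
  by rewrite mem_cat mem_nseq andbF.
rewrite cats1; apply: rstep (step_R _) _.
rewrite rcons_cat; have := IH (rcons z L1); rewrite cat_rcons; apply.
by rewrite mem_rcons in_cons.
Qed.

Lemma first_bar v : Lbar \in v -> exists p s, v = p ++ Lbar :: s /\ Lbar \notin p.
Proof.
elim: v => [|x v IH] //; rewrite in_cons; have [->|hx] := eqVneq x Lbar.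
  by move=> _; exists [::], v.
move=> /= /IH [p [s [-> hp]]]; exists (x :: p), s; split => //.
by rewrite in_cons negb_or eq_sym hx.
Qed.

Lemma phase4 N v : (count (pred1 Lbar) v <= N)%N -> exists z, [/\ Lbar \notin z, size z = size v,
  count nz z = count nz v & reach z v].
Proof.
elim: N v => [|N IH] v hN.
  exists v; split => //; last by apply: rrefl.
  by rewrite -has_pred1 has_count -leqNgt.
have [hb|hb] := boolP (Lbar \in v); last by exists v; split => //; apply: rrefl.
have [p [s [hv hp]]] := first_bar hb.
have hw : (count (pred1 Lbar) (L1 :: p ++ s) <= N)%N.
  by move: hN; rewrite hv /= !count_cat /= add0n addnS ltnS.
have [z [hz hs hc hr]] := IH _ hw.
exists z; split => //.
- by rewrite hs hv /= !size_cat /= addnS.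
- by rewrite hc hv /= !count_cat /= addnS.
apply: reach_trans hr _; rewrite hv.
apply: rstep (step_L _) _.
by have := L_barR [::] s hp.
Qed.

Lemma nobar_count1 z : Lbar \notin z -> count (pred1 L1) z = count nz z.
Proof. by elim: z => //= x z IH; rewrite in_cons negb_or => /andP [hx /IH ->]; case: x hx => [[]|]. Qed.

Lemma nobar_count0 z : Lbar \notin z -> count (pred1 L0) z = (size z - count nz z)%N.
Proof.
move=> _; rewrite -(count_predC nz z) addnC addnK.
by apply: eq_count => x; rewrite /nz /= negbK.
Qed.

Lemma irreducible u v : size u = size v -> count nz u = count nz v -> reach u v.
Proof.
move=> hs hc.
have [u1 [hb1 hs1 hc1 hr1]] := phase1 u [::].
have [z [hbz hsz hcz hrz]] := phase4 (leqnn (count (pred1 Lbar) v)).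
apply: reach_trans hr1 _.
apply: reach_trans (_ : reach _ (nseq (count nz u) L1 ++ nseq (size u - count nz u) L0)) _.
  have := phase2 [::] [::] hb1; rewrite /= cats0 nobar_count1 // nobar_count0 // hs1 hc1; rewrite cats0; apply.
have hbr : Lbar \notin nseq (size u - count nz u) L0 by rewrite mem_nseq andbF.
apply: (reach_trans (bridge (count nz u) hbr)).
apply: reach_trans _ hrz.
have := phase3 [::] [::] hbz; rewrite /= cats0 nobar_count1 // nobar_count0 // hsz hcz hs hc; rewrite cats0; apply.
Qed.

End Reach.



Section Uniq.
Variable R : realFieldType.
Variables a b c d e : R.
Hypotheses (ha : 0 < a) (hb : 0 < b) (hc : 0 < c) (hd : 0 < d) (he : 0 < e).

Lemma move_props u w r : (w, r) \in moves a b c d e u ->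
  [/\ 0 < r, size w = size u & count nz w = count nz u].
Proof.
rewrite movesE !mem_cat => /or3P [].
- rewrite mem_pmap => /mapP [i]; rewrite mem_iota add0n => hi.
  have hi' : (i.+1 < size u)%N by case: (size u) hi => // m; rewrite ltnS.
  rewrite /mvb; case hE: (swap_rate a b c (nth L0 u i) (nth L0 u i.+1)) => [r0|] //= [-> ->].
  rewrite -/(swp u i) size_swp // count_swp //; split => //.
  move: hE; rewrite /swap_rate; repeat case: ifP => _. 1-3: by move=> [<-]. by [].
- rewrite /mvR; case: ifP => // /andP [hs hl]; rewrite mem_seq1 => /eqP [-> ->].
  have hs' : ((size u).-1 < size u)%N by case: (size u) hs.
  split => //; first by rewrite size_set_nth; apply/maxn_idPr.
  by rewrite count_set_nth_ltn // nth_last (eqP hl) /= addnK.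
- rewrite /mvL; case: ifP => // hl; rewrite mem_seq1 => /eqP [-> ->].
  case: u hl => [|x u] //= hl; split => //.
  by rewrite (eqP hl).
Qed.

Lemma rate_ge0 u v : 0 <= rate a b c d e u v.
Proof.
rewrite /rate big_seq_cond; apply: sumr_ge0 => -[w r] /andP [hm _].
by have [+ _ _] := move_props hm; apply: ltW.
Qed.

Lemma rate_pos u w r : (w, r) \in moves a b c d e u -> 0 < rate a b c d e u w.
Proof.
move=> hm; have [hr _ _] := move_props hm.
rewrite /rate (big_rem (w, r)) //= eqxx ltr_wpDr //.
rewrite big_seq_cond; apply: sumr_ge0 => -[w' r'] /andP [hm' _].
have [+ _ _] := move_props (mem_rem hm'); apply: ltW.
Qed.

Lemma neq0 (x : R) : 0 < x -> x != 0.
Proof. exact: lt0r_neq0. Qed.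

Lemma uniq_stat n t (f : seq letter -> R) (pi : n.-tuple letter -> R) :
  bracket_rec a b c d e f -> (0 < n)%N -> stationary a b c d e t pi ->
  forall u, in_state_space t u ->
  pi u = f u / \sum_(w : n.-tuple letter | in_state_space t w) f w.
Proof.
move=> hf hn [hpos hsum hbal] u0 hu0.
have fpos := f_pos ha hb hc hd he hf.
have [um hum hmin] := arg_minP (fun w => pi w / f w) hu0.
set m := pi um / f um.
pose q (w : n.-tuple letter) := pi w - m * f w.
have hq0 : forall w, in_state_space t w -> 0 <= q w.
  move=> w hw; rewrite /q subr_ge0 -ler_pdivlMr //; exact: hmin.
have hqbal : forall v, in_state_space t v ->
    \sum_(u : n.-tuple letter | in_state_space t u) q u * rate a b c d e u v
    = q v * out_rate a b c d e v.
  move=> v hv; rewrite /q.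
  under eq_bigr do rewrite mulrBl -mulrA.
  rewrite sumrB -mulr_sumr hbal // (balance_f _ _ _ _ _ _ hn hv) ?mulrBl ?mulrA //; exact: neq0.
have prop : forall (v u : n.-tuple letter), in_state_space t v -> q v = 0 ->
    in_state_space t u -> 0 < rate a b c d e u v -> q u = 0.
  move=> v u hv qv hu hr.
  have := hqbal v hv; rewrite qv mul0r => hz.
  have hnn : forall w : n.-tuple letter, in_state_space t w -> 0 <= q w * rate a b c d e w v.
    by move=> w hw; apply: mulr_ge0; [exact: hq0 | exact: rate_ge0].
  have /eqP := psumr_eq0P hnn hz hu.
  by rewrite mulf_eq0 (negbTE (neq0 hr)) orbF => /eqP.
have hreach : forall x y, reach a b c d e x y ->
    (forall ty : n.-tuple letter, val ty = y -> in_state_space t ty -> q ty = 0) ->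
    forall tx : n.-tuple letter, val tx = x -> in_state_space t tx -> q tx = 0.
  move=> x y; elim => [z|x1 w y1 [r hm] _ IH] hP tx htx hs; first exact: hP.
  have [_ hsz hcn] := move_props hm.
  have hw : size w == n by rewrite hsz -htx size_tuple.
  pose tw := Tuple hw.
  have htw : in_state_space t tw.
    by rewrite /in_state_space /= -/nz hcn -htx.
  apply: (prop tw) => //; first exact: IH.
  by apply: (@rate_pos _ _ r); rewrite htx.
have qall : forall w, in_state_space t w -> q w = 0.
  move=> w hw; apply: (hreach (val w) (val um)) => //.
    apply: irreducible; first by rewrite !size_tuple.
    by rewrite /nz (eqP hw) (eqP hum).
  move=> ty /val_inj -> _; rewrite /q /m divfK ?subrr //; exact: neq0.
have hpi : forall w, in_state_space t w -> pi w = m * f w.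
  by move=> w hw; apply/eqP; rewrite -subr_eq0; apply/eqP; exact: qall.
set S := \sum_(w : n.-tuple letter | in_state_space t w) f w.
have hmS : m * S = 1.
  rewrite -hsum /S mulr_sumr; apply: eq_bigr => w hw; by rewrite hpi.
have hS : S != 0.
  apply: neq0; rewrite /S (bigD1 u0) //= ltr_wpDr // ?fpos //.
  by apply: sumr_ge0 => w _; apply: ltW.
rewrite hpi // mulrC; congr (_ * _).
by apply: (mulIf hS); rewrite mulVf // mulrC.
Qed.

End Uniq.

Unset Implicit Arguments.
Set Strict Implicit.

Theorem theorem2 (n t : nat) (R : realFieldType) (a b c d e : R) :
  (2 <= n)%N -> (1 <= t)%N -> (t <= n - 1)%N ->
  0 < a -> 0 < b -> 0 < c -> 0 < d -> 0 < e ->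
  (exists f : seq letter -> R, bracket_rec a b c d e f) /\
  (forall f : seq letter -> R, bracket_rec a b c d e f ->
     forall pi : n.-tuple letter -> R,
       stationary a b c d e t pi <->
       (forall u : n.-tuple letter, in_state_space t u ->
          pi u = f u / \sum_(w : n.-tuple letter | in_state_space t w) f w)).
Proof.
move=> hn ht1 htn ha hb hc hd he; split.
  by exists (fbr a b c d e); apply: fbr_rec; apply: lt0r_neq0.
have hn0 : (0 < n)%N by apply: leq_trans hn.
move=> f hf pi; split.
  by move=> hst u hu; apply: (uniq_stat ha hb hc hd he hf hn0 hst).
move=> hpi.
have fpos := f_pos ha hb hc hd he hf.
set S := \sum_(w : n.-tuple letter | in_state_space t w) f w.
have hsz : size (nseq t L1 ++ nseq (n - t) L0) == n.
  by rewrite size_cat !size_nseq subnKC // (leq_trans htn) // leq_subr.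
pose u0 := Tuple hsz.
have hu0 : in_state_space t u0.
  by rewrite /in_state_space /= count_cat !count_nseq /= mul1n mul0n addn0.
have hS : 0 < S.
  rewrite /S (bigD1 u0) //= ltr_wpDr // ?fpos //.
  by apply: sumr_ge0 => w _; apply: ltW.
split.
- by move=> u hu; rewrite hpi // divr_ge0 // ltW.
- transitivity (\sum_(u : n.-tuple letter | in_state_space t u) f u / S).
    by apply: eq_bigr => u hu; rewrite hpi.
  by rewrite -mulr_suml -/S divff // lt0r_neq0.
- move=> v hv.
  transitivity ((\sum_(u : n.-tuple letter | in_state_space t u) f u * rate a b c d e u v) / S).
    rewrite mulr_suml; apply: eq_bigr => u hu; rewrite hpi //.
    by rewrite mulrAC.
  rewrite (balance_f (lt0r_neq0 ha) (lt0r_neq0 hb) (lt0r_neq0 hc) (lt0r_neq0 hd) (lt0r_neq0 he) hf hn0 hv).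
  by rewrite hpi // mulrAC.
Qed.
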